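(* Assume that the super Poincaré inequality $$\mu(f^2)\le r\,\mathcal E(f)+\beta(r)\,\mu(|f|)^2,\qquad r>0,\ f\in\mathcal D(\mathcal E),$$ holds for some decreasing function $\beta:(0,\infty)\to(0,\infty)$. Then for any integers $n,k\ge1$, any $s>0$ and any $f\in\mathcal A$, $$\mu_V(f^21_{\{\rho\le n\}})\le 2s\,e^{K_{n,k}(V)}\mathcal E_V(f)+16\lambda s\,e^{K_{n,k}(V)}\mu_V(f^2)+16s\,e^{Z_n(V)}\eta_{n,k}\|f\|_\infty^2+\beta(s)e^{J_{n,k}(V)}\mu_V(|f|)^2.$$
   Context: Setting: $(E,d)$ is a Polish space with Borel $\sigma$-field and a probability measure $\mu$. Let $q:E\times E\to[0,\infty)$ be measurable with $q(x,x)=0$ for all $x$, and $\lambda:=\sup_{x\in E}\int_E(1\wedge d(x,y)^2)q(x,y)\,\mu(\mathrm dy)<\infty.$ For bounded measurable $f,g$ set $\Gamma(f,g)(x)=\int_E(f(x)-f(y))(g(x)-g(y))q(x,y)\mu(\mathrm dy)$, $\Gamma(f)=\Gamma(f,f)$; $\mathcal A$ is the set of bounded measurable $f$ with $\Gamma(f)$ bounded, assumed dense in $L^2(\mu)$. $(\mathcal E,\mathcal D(\mathcal E))$ is the closure in $L^2(\mu)$ of $\mathcal E(f,g)=\mu(\Gamma(f,g))$ on $\mathcal A$, $\mathcal E(f)=\mathcal E(f,f)$. Fix $o\in E$, $\rho(x)=d(o,x)$. $V$ is measurable, bounded on each $\{\rho\le r\}$, with $\mu(e^V)=1$; $\mu_V=e^V\mu$;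 $\mathcal E_V(f)=\mu_V(\Gamma(f))$ for $f\in\mathcal A$. $\|f\|_\infty$ is the uniform norm. Notation: $K_{n,k}(V)=\sup_{\rho\le n+2}V-\inf_{\rho\le n+k+2}V$; $J_{n,k}(V)=\sup_{\rho\le n+1}V-2\inf_{\rho\le n+k+2}V$; $Z_n(V)=\sup_{\rho\le n+1}V$; $\eta_{n,k}=\iint_{\{\rho(x)>n+k+2,\ \rho(y)\le n+1\}}q(x,y)\mu(\mathrm dy)\mu(\mathrm dx)$. *)

(* Defs.v *)
From HB Require Import structures.
From mathcomp Require Import all_boot all_order all_algebra.
From mathcomp Require Import all_classical all_reals all_analysis.
Set Implicit Arguments. Unset Strict Implicit. Unset Printing Implicit Defensive.
Import Order.TTheory GRing.Theory Num.Theory.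
Local Open Scope classical_set_scope.
Local Open Scope ring_scope.

Section Defs.
Context (R : realType) (dE : measure_display) (E : measurableType dE).

Definition is_metric (d : E -> E -> R) : Prop :=
  [/\ (forall x y, 0 <= d x y), (forall x y, d x y = 0 <-> x = y),
      (forall x y, d x y = d y x) & (forall x y z, d x z <= d x y + d y z)].

Definition d_open (d : E -> E -> R) : set (set E) :=
  [set A | forall x, A x -> exists e : R, 0 < e /\ forall y, d x y < e -> A y].

Definition d_complete (d : E -> E -> R) : Prop :=
  forall u : nat -> E,
    (forall e : R, 0 < e -> exists N, forall n m, (N <= n)%N -> (N <= m)%N -> d (u n) (u m) < e) ->
    exists l, forall e : R, 0 < e -> exists N, forall n, (N <= n)%N -> d (u n) l < e.

Definition d_separable (d : E -> E -> R) : Prop :=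
  exists u : nat -> E, forall x (e : R), 0 < e -> exists n, d x (u n) < e.

Definition polish_borel (d : E -> E -> R) : Prop :=
  [/\ is_metric d, d_complete d, d_separable d &
      forall A : set E, measurable A <-> <<s d_open d >> A].

Variable (mu : probability E R) (q : E -> E -> R).

Definition Gam (f : E -> R) (x : E) : \bar R :=
  (\int[mu]_y ((((f x - f y) ^+ 2) * q x y)%R)%:E)%E.

Definition in_A (f : E -> R) : Prop :=
  [/\ measurable_fun setT f, (exists M : R, forall x, `|f x| <= M) &
      (exists M : R, forall x, (Gam f x <= M%:E)%E)].

Definition form (f : E -> R) : \bar R := (\int[mu]_x Gam f x)%E.

(** (f, e) : f belongs to the domain of the closure (E, D(E)) of (form, A)
    in L^2(mu), and the closed form takes the value e at f. *)
Definition closure_form (f : E -> R) (e : R) : Prop :=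
  measurable_fun setT f /\ (\int[mu]_x (((f x) ^+ 2)%R)%:E < +oo)%E /\
  exists g : nat -> E -> R,
    [/\ (forall n, in_A (g n)),
        (forall eps : R, 0 < eps -> exists N, forall n, (N <= n)%N ->
           (\int[mu]_x (((g n x - f x) ^+ 2)%R)%:E < eps%:E)%E),
        (forall eps : R, 0 < eps -> exists N, forall n m, (N <= n)%N -> (N <= m)%N ->
           (form (g n \- g m)%R < eps%:E)%E) &
        (forall eps : R, 0 < eps -> exists N, forall n, (N <= n)%N ->
           exists en : R, form (g n) = en%:E /\ (`|en - e| < eps)%R)].

Definition A_dense : Prop :=
  forall f : E -> R, measurable_fun setT f -> (\int[mu]_x (((f x) ^+ 2)%R)%:E < +oo)%E ->
  forall eps : R, 0 < eps -> exists g, in_A g /\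
    (\int[mu]_x (((f x - g x) ^+ 2)%R)%:E < eps%:E)%E.

Variable (d : E -> E -> R).

Definition lam : \bar R :=
  ereal_sup [set (\int[mu]_y (((Order.min 1 (d x y ^+ 2)) * q x y)%R)%:E)%E | x in [set: E]].

Variable (o : E).
Definition rho (x : E) : R := d o x.

Variable (V : E -> R).
Definition muV (g : E -> \bar R) : \bar R := (\int[mu]_x (g x * (expR (V x))%:E))%E.

Definition supV (r : R) : R := sup [set V x | x in [set x | rho x <= r]].
Definition infV (r : R) : R := inf [set V x | x in [set x | rho x <= r]].

Definition Knk (n k : nat) : R := supV (n%:R + 2) - infV (n%:R + k%:R + 2).
Definition Jnk (n k : nat) : R := supV (n%:R + 1) - 2 * infV (n%:R + k%:R + 2).
Definition Zn (n : nat) : R := supV (n%:R + 1).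

Definition etank (n k : nat) : \bar R :=
  (\int[mu]_(x in [set x | (n%:R + k%:R + 2 < rho x)%R])
     \int[mu]_(y in [set y | (rho y <= n%:R + 1)%R]) (q x y)%:E)%E.

End Defs.

Definition sup_norm (T : Type) (R : realType) (f : T -> R) : R :=
  sup [set `|f x| | x in [set: T]].

(* Main.v *)
Require Import Defs.
From HB Require Import structures.
From mathcomp Require Import all_boot all_order all_algebra.
From mathcomp Require Import all_classical all_reals all_analysis.
From mathcomp Require Import measurable_realfun.
From mathcomp Require Import ring lra.
Import Order.TTheory GRing.Theory Num.Theory.
Local Open Scope classical_set_scope.
Local Open Scope ring_scope.

Lemma clamp_lip (R : realType) (a b : R) :
  `|Num.min 1 (Num.max 0 a) - Num.min 1 (Num.max 0 b)| <= `|a - b|.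
Proof.
have h1 : a - b <= `|a - b| := ler_norm _.
have h2 : b - a <= `|a - b| by rewrite distrC ler_norm.
move: h1 h2; set t := `|a - b| => h1 h2.
rewrite ler_norml.
rewrite !maxEle !minEle.
case: (leP 0 a) => ha; case: (leP 0 b) => hb;
  case: (leP 1 a) => h3; case: (leP 1 b) => h4; try case: (leP 1 0) => h5;
  apply/andP; split; lra.
Qed.

Lemma clamp_ge0 (R : realType) (a : R) : 0 <= Num.min 1 (Num.max 0 a).
Proof. rewrite !maxEle !minEle; case: (leP 0 a) => ha; case: (leP 1 a) => h3;
  try case: (leP 1 0) => h5; lra. Qed.

Lemma clamp_le1 (R : realType) (a : R) : Num.min 1 (Num.max 0 a) <= 1.
Proof. rewrite !maxEle !minEle; case: (leP 0 a) => ha; case: (leP 1 a) => h3;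
  try case: (leP 1 0) => h5; lra. Qed.

Lemma clamp_1 (R : realType) (a : R) : 1 <= a -> Num.min 1 (Num.max 0 a) = 1.
Proof. move=> h; rewrite !maxEle !minEle; case: (leP 0 a) => ha; case: (leP 1 a) => h3;
  try case: (leP 1 0) => h5; lra. Qed.

Lemma clamp_0 (R : realType) (a : R) : a < 0 -> Num.min 1 (Num.max 0 a) = 0.
Proof. move=> h; rewrite !maxEle !minEle; case: (leP 0 a) => ha; case: (leP 1 a) => h3;
  try case: (leP 1 0) => h5; lra. Qed.

Lemma mEFin d (T : measurableType d) (R : realType) (D : set T) (h : T -> R) :
  measurable_fun D h -> measurable_fun D (fun x => (h x)%:E).
Proof. by move=> mh; exact: (proj2 (measurable_EFinP D h) mh). Qed.
Arguments mEFin {d T R D h}.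

Lemma sq_le_abs (R : realType) (a b : R) : `|a| <= `|b| -> a ^+ 2 <= b ^+ 2.
Proof.
move=> h; rewrite -(real_normK (num_real a)) -(real_normK (num_real b)).
have := normr_ge0 a; nra.
Qed.

Section Main.
Variables (R : realType) (dE : measure_display) (E : measurableType dE)
  (d : E -> E -> R) (mu : probability E R) (q : E -> E -> R) (o : E).
Hypothesis hpol : polish_borel d.

Lemma d_meas (z : E) : measurable_fun [set: E] (d z).
Proof.
have [[d0 d_eq d_sym d_tri] _ _ hm] := hpol.
apply: (measurability _ (RGenInftyO.measurableE R)) => //.
move=> _ [_ [a ->] <-]; rewrite setTI.
apply/hm; apply: sub_gen_smallest => x /=; rewrite in_itv /= => ha.
exists (a - d z x); split; first by rewrite subr_gt0.
move=> y hy; rewrite in_itv /=.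
have := d_tri z x y; lra.
Qed.

Let rh := rho d o.

Lemma rho_meas : measurable_fun [set: E] rh.
Proof. exact: d_meas. Qed.

Lemma rho_lip x y : `|rh x - rh y| <= d x y.
Proof.
have [[d0 d_eq d_sym d_tri] _ _ hm] := hpol.
rewrite /rh /rho ler_norml; have := d_tri o x y; have := d_tri o y x.
rewrite (d_sym y x); move=> *; apply/andP; split; lra.
Qed.

Lemma meas_le r : measurable [set x | rh x <= r].
Proof.
have := rho_meas measurableT _ (measurable_itv `]-oo, r]); rewrite setTI.
congr measurable; apply/seteqP; split => x /=; rewrite in_itv /=; done.
Qed.

Lemma meas_gt r : measurable [set x | r < rh x].
Proof.
have := rho_meas measurableT _ (measurable_itv `]r, +oo[); rewrite setTI.
congr measurable; apply/seteqP; split => x /=; rewrite in_itv /= ?andbT; done.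
Qed.

Variable (n : nat).
Let phi x := Num.min 1 (Num.max 0 (n%:R + 1 - rh x)).

Lemma phi_ge0 x : 0 <= phi x. Proof. exact: clamp_ge0. Qed.
Lemma phi_le1 x : phi x <= 1. Proof. exact: clamp_le1. Qed.
Lemma phi1 x : rh x <= n%:R -> phi x = 1.
Proof. by move=> h; apply: clamp_1; lra. Qed.
Lemma phi0 x : n%:R + 1 < rh x -> phi x = 0.
Proof. by move=> h; apply: clamp_0; lra. Qed.
Lemma phi_sq x y : (phi x - phi y) ^+ 2 <= Num.min 1 (d x y ^+ 2).
Proof.
have h1 : `|phi x - phi y| <= d x y.
  have := clamp_lip _ (n%:R + 1 - rh x) (n%:R + 1 - rh y).
  have -> : n%:R + 1 - rh x - (n%:R + 1 - rh y) = rh y - rh x by ring.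
  move=> h; apply: le_trans h _; rewrite distrC; exact: rho_lip.
have := phi_ge0 x; have := phi_ge0 y; have := phi_le1 x; have := phi_le1 y.
move: h1; rewrite ler_norml => /andP[h1 h2] *.
rewrite le_min; apply/andP; split; nra.
Qed.

Lemma phi_meas : measurable_fun [set: E] phi.
Proof.
apply: measurable_minr; first exact: measurable_cst.
apply: measurable_maxr; first exact: measurable_cst.
apply: measurable_funB; first exact: measurable_cst.
exact: rho_meas.
Qed.

Hypothesis q0 : forall x y, 0 <= q x y.
Hypothesis mq : measurable_fun [set: E * E] (fun p => q p.1 p.2).

Lemma q_sec x : measurable_fun [set: E] (q x).
Proof. have := measurable_fun_pair2 x mq; exact. Qed.

Lemma Gprod_meas (h : E -> R) : measurable_fun [set: E] h ->
  measurable_fun [set: E * E] (fun p => (h p.1 - h p.2) ^+ 2 * q p.1 p.2).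
Proof.
move=> mh; apply: measurable_funM => //; apply: measurable_funX.
apply: measurable_funB.
- have := measurableT_comp mh (@measurable_fst _ _ E E); exact.
- have := measurableT_comp mh (@measurable_snd _ _ E E); exact.
Qed.

Lemma Gam_meas (h : E -> R) : measurable_fun [set: E] h -> measurable_fun [set: E] (Gam mu q h).
Proof.
move=> mh.
have := @measurable_fun_fubini_tonelli_F _ _ E E R mu
  (fun p => ((h p.1 - h p.2) ^+ 2 * q p.1 p.2)%:E).
apply.
- by apply: mEFin; exact: Gprod_meas.
- by move=> p; rewrite lee_fin mulr_ge0 ?sqr_ge0.
Qed.

Lemma Gam_ge0 (h : E -> R) x : (0 <= Gam mu q h x)%E.
Proof. by apply: integral_ge0 => y _; rewrite lee_fin mulr_ge0 ?sqr_ge0. Qed.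

Lemma lamx_meas x : measurable_fun [set: E] (fun y => Num.min 1 (d x y ^+ 2) * q x y).
Proof.
apply: measurable_funM; last exact: q_sec.
apply: measurable_minr; first exact: measurable_cst.
apply: measurable_funX; exact: d_meas.
Qed.

Lemma mu_setT : (mu : {measure set E -> \bar R}) [set: E] = 1%E.
Proof. exact: probability_setT. Qed.

Lemma mq_ge0 x y : 0 <= Num.min 1 (d x y ^+ 2) * q x y.
Proof. by rewrite mulr_ge0 ?q0 // le_min ler01 sqr_ge0. Qed.

Variable (L : R).
Hypothesis hL : lam mu q d = L%:E.

Lemma lamx_le x : (\int[mu]_y ((Num.min 1 (d x y ^+ 2) * q x y)%:E) <= L%:E)%E.
Proof. rewrite -hL; apply: ereal_sup_ubound; by exists x. Qed.

Variables (f : E -> R) (mf : measurable_fun [set: E] f) (Mf : R).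
Hypothesis hMf : forall x, `|f x| <= Mf.

Let S := sup_norm f.
Lemma hS x : `|f x| <= S.
Proof.
rewrite /S /sup_norm; apply: ub_le_sup; last by exists x.
by exists Mf => _ [y _ <-]; exact: hMf.
Qed.

Let g x := f x * phi x.

Lemma g_meas : measurable_fun [set: E] g.
Proof. exact: measurable_funM mf phi_meas. Qed.

Lemma g_abs x : `|g x| <= `|f x|.
Proof.
rewrite /g normrM (ger0_norm (phi_ge0 x)).
by apply: ler_piMr => //; exact: phi_le1.
Qed.

Lemma g_far x : n%:R + 1 < rh x -> g x = 0.
Proof. by move=> h; rewrite /g phi0 // mulr0. Qed.

Lemma g_near x : rh x <= n%:R -> g x = f x.
Proof. by move=> h; rewrite /g phi1 // mulr1. Qed.

Lemma key1 x y : (g x - g y) ^+ 2 * q x y <=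
  2 * ((f x - f y) ^+ 2 * q x y) + 2 * f x ^+ 2 * (Num.min 1 (d x y ^+ 2) * q x y).
Proof.
have e : g x - g y = phi y * (f x - f y) + f x * (phi x - phi y) by rewrite /g; ring.
rewrite e; have hq := q0 x y; have hu := phi_sq x y.
have hp0 := phi_ge0 y; have hp1 := phi_le1 y.
move: hu hp0 hp1; set p := phi y; set u := phi x - phi y; set a := f x - f y;
  set c := f x; set m := Num.min 1 (d x y ^+ 2) => hu hp0 hp1.
have t1 : (p * a + c * u) ^+ 2 <= 2 * (p * a) ^+ 2 + 2 * (c * u) ^+ 2.
  have := sqr_ge0 (p * a - c * u).
  have -> : (p * a - c * u) ^+ 2 = 2 * (p * a) ^+ 2 + 2 * (c * u) ^+ 2 - (p * a + c * u) ^+ 2 by ring.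
  lra.
have t2 : (p * a) ^+ 2 <= a ^+ 2.
  rewrite exprMn; apply: ler_piMl; first exact: sqr_ge0.
  rewrite expr2; nra.
have t3 : (c * u) ^+ 2 <= c ^+ 2 * m.
  by rewrite exprMn; apply: ler_wpM2l => //; exact: sqr_ge0.
have t4 : (p * a + c * u) ^+ 2 <= 2 * a ^+ 2 + 2 * c ^+ 2 * m by lra.
apply: le_trans (ler_wpM2r hq t4) _.
rewrite le_eqVlt; apply/orP; left; apply/eqP; ring.
Qed.

Lemma key2 x y : n%:R + 1 < rh x -> (g x - g y) ^+ 2 * q x y <=
  S ^+ 2 * (\1_[set z | rh z <= n%:R + 1] y * q x y).
Proof.
move=> hx; rewrite g_far // sub0r sqrrN indicE.
have hq := q0 x y.
case: (boolP (y \in [set z | rh z <= n%:R + 1])) => hy.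
- rewrite mul1r; apply: ler_wpM2r => //.
  have := le_trans (g_abs y) (hS y); rewrite ler_norml => /andP[h1 h2].
  have : 0 <= S by apply: le_trans (hS y); exact: normr_ge0.
  nra.
- rewrite mul0r mulr0 g_far ?expr0n /= ?mul0r //.
  rewrite ltNge; apply/negP => h; apply: (negP hy); exact: mem_set.
Qed.

Lemma sec_meas_f x : measurable_fun [set: E] (fun y => (f x - f y) ^+ 2 * q x y).
Proof.
apply: measurable_funM; last exact: q_sec.
apply: measurable_funX; apply: measurable_funB => //; exact: measurable_cst.
Qed.

Lemma sec_meas_g x : measurable_fun [set: E] (fun y => (g x - g y) ^+ 2 * q x y).
Proof.
apply: measurable_funM; last exact: q_sec.
apply: measurable_funX; apply: measurable_funB; [exact: measurable_cst|exact: g_meas].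
Qed.

Hypothesis hL0 : 0 <= L.

Lemma Gam_key x : (Gam mu q g x <= 2%:E * Gam mu q f x + (2 * f x ^+ 2 * L)%:E)%E.
Proof.
rewrite /Gam.
set F := fun y => 2 * ((f x - f y) ^+ 2 * q x y) +
  2 * f x ^+ 2 * (Num.min 1 (d x y ^+ 2) * q x y).
have mF : measurable_fun [set: E] F.
  apply: measurable_funD; apply: measurable_funM; try exact: measurable_cst.
  - exact: sec_meas_f.
  - exact: lamx_meas.
have step1 : (\int[mu]_y (((g x - g y) ^+ 2 * q x y)%:E) <= \int[mu]_y ((F y)%:E))%E.
  apply: ge0_le_integral => //.
  - by move=> y _; rewrite lee_fin mulr_ge0 ?sqr_ge0.
  - apply: mEFin; exact: sec_meas_g.
  - exact: mEFin.
  - by move=> y _; rewrite lee_fin key1.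
have step2 : (\int[mu]_y ((F y)%:E) = 2%:E * \int[mu]_y (((f x - f y) ^+ 2 * q x y)%:E)
   + (2 * f x ^+ 2)%:E * \int[mu]_y ((Num.min 1 (d x y ^+ 2) * q x y)%:E))%E.
  rewrite /F; under eq_integral => y _ do rewrite EFinD (EFinM 2) (EFinM (2 * f x ^+ 2)).
  have i1 : (\int[mu]_y (2%:E * ((f x - f y) ^+ 2 * q x y)%:E) =
     2%:E * \int[mu]_y (((f x - f y) ^+ 2 * q x y)%:E))%E.
    apply: ge0_integralZl_EFin => //.
    - by move=> y _; rewrite lee_fin mulr_ge0 ?sqr_ge0.
    - apply: mEFin; exact: sec_meas_f.
  have i2 : (\int[mu]_y ((2 * f x ^+ 2)%:E * (Num.min 1 (d x y ^+ 2) * q x y)%:E) =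
     (2 * f x ^+ 2)%:E * \int[mu]_y ((Num.min 1 (d x y ^+ 2) * q x y)%:E))%E.
    apply: ge0_integralZl_EFin => //.
    - by move=> y _; rewrite lee_fin mulr_ge0 ?q0 // le_min ler01 sqr_ge0.
    - apply: mEFin; exact: lamx_meas.
    - by rewrite mulr_ge0 ?sqr_ge0.
  rewrite ge0_integralD //; first by rewrite i1 i2.
  - move=> y _; apply: mule_ge0; first (first [by [] | by rewrite lee_fin | by rewrite lee_fin ler0n | by rewrite lee0n]); by rewrite lee_fin mulr_ge0 ?sqr_ge0 ?q0.
  - apply: measurable_funeM; apply: mEFin; exact: sec_meas_f.
  - move=> y _; apply: mule_ge0; first (first [by [] | by rewrite lee_fin | by rewrite lee_fin mulr_ge0 ?sqr_ge0]); by rewrite lee_fin mq_ge0.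
  - apply: measurable_funeM; apply: mEFin; exact: lamx_meas.
apply: le_trans step1 _; rewrite step2; apply: leeD => //.
rewrite (EFinM (2 * f x ^+ 2) L); apply: lee_wpmul2l; first by rewrite lee_fin mulr_ge0 ?sqr_ge0.
exact: lamx_le.
Qed.

Variable (MG : R).
Hypothesis hMG : forall x, (Gam mu q f x <= MG%:E)%E.

Lemma f_sq x : f x ^+ 2 <= Mf ^+ 2.
Proof. have := hMf x; rewrite ler_norml => /andP[h1 h2]; nra. Qed.

Let C := 2 * MG + 2 * Mf ^+ 2 * L.

Lemma Gam_g_le x : (Gam mu q g x <= C%:E)%E.
Proof.
apply: le_trans (Gam_key x) _; rewrite /C (EFinD (2 * MG)); apply: leeD.
- rewrite EFinM; apply: lee_wpmul2l => //; by rewrite lee_fin.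
- rewrite lee_fin; apply: ler_wpM2r => //; apply: ler_wpM2l => //; exact: f_sq.
Qed.

Lemma g_inA : in_A mu q g.
Proof.
split; first exact: g_meas.
- by exists Mf => x; apply: le_trans (g_abs x) (hMf x).
- by exists C; exact: Gam_g_le.
Qed.

Lemma form_g_le : (Defs.form mu q g <= C%:E)%E.
Proof.
rewrite /Defs.form.
have h : (\int[mu]_x Gam mu q g x <= \int[mu]_x (cst C%:E) x)%E.
  apply: ge0_le_integral => //.
  - by move=> x _; exact: Gam_ge0.
  - exact: Gam_meas g_meas.
  - by move=> x _; exact: Gam_g_le.
apply: le_trans h _.
by rewrite integral_cst // mu_setT mule1.
Qed.

Let eg := fine (Defs.form mu q g).

Lemma form_gE : Defs.form mu q g = eg%:E.
Proof.
rewrite /eg fineK // ge0_fin_numE; last by apply: integral_ge0 => x _; exact: Gam_ge0.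
exact: le_lt_trans form_g_le (ltry _).
Qed.

Lemma g_cf : closure_form mu q g eg.
Proof.
split; first exact: g_meas.
split.
  have h : (\int[mu]_x ((g x ^+ 2)%:E) <= \int[mu]_x (cst (Mf ^+ 2)%:E) x)%E.
    apply: ge0_le_integral => //.
    - by move=> x _; rewrite lee_fin sqr_ge0.
    - apply: mEFin; apply: measurable_funX; exact: g_meas.
    - move=> x _; rewrite lee_fin; apply: le_trans (f_sq x).
      exact: sq_le_abs (g_abs x).
  apply: le_lt_trans h _.
  by rewrite integral_cst // mu_setT mule1 ltry.
exists (fun _ => g); split.
- by move=> _; exact: g_inA.
- move=> eps he; exists 0%N => m _.
  by rewrite integral0_eq ?lte_fin // => x _; rewrite subrr expr0n.
- move=> eps he; exists 0%N => m m' _ _.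
  rewrite /Defs.form integral0_eq ?lte_fin // => x _.
  rewrite /Gam integral0_eq // => y _ /=.
  by rewrite !subrr expr0n /= mul0r.
- move=> eps he; exists 0%N => m _; exists eg; split; first exact: form_gE.
  by rewrite subrr normr0.
Qed.

Variables (V : E -> R) (mV : measurable_fun [set: E] V).
Hypothesis Vbnd : forall r : R, exists M : R, forall x, rho d o x <= r -> `|V x| <= M.
Variables (k : nat).
Hypothesis hk : (1 <= k)%N.

Lemma V_ub r x : rh x <= r -> V x <= supV d o V r.
Proof.
move=> hx; rewrite /supV; apply: ub_le_sup; last by exists x.
have [M hM] := Vbnd r; exists M => _ [y hy <-].
exact: le_trans (ler_norm _) (hM y hy).
Qed.

Lemma V_lb r x : rh x <= r -> infV d o V r <= V x.
Proof.
move=> hx; rewrite /infV; apply: ge_inf; last by exists x.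
have [M hM] := Vbnd r; exists (- M) => _ [y hy <-].
by have := hM y hy; rewrite ler_norml => /andP[].
Qed.

Lemma rh_o : rh o = 0.
Proof. have [[d0 d_eq d_sym d_tri] _ _ hm] := hpol; by apply/d_eq. Qed.

Lemma supV_mono r1 r2 : 0 <= r1 -> r1 <= r2 -> supV d o V r1 <= supV d o V r2.
Proof.
move=> h0 h12; apply: ge_sup.
  exists (V o), o => //=.
  have [[d0 d_eq _ _] _ _ _] := hpol; by rewrite /rho (proj2 (d_eq o o) erefl).
move=> _ [y hy <-]; apply: V_ub; exact: le_trans hy h12.
Qed.

Let I := infV d o V (n%:R + k%:R + 2).
Let Z := supV d o V (n%:R + 1).

Lemma expVI x : rh x <= n%:R + k%:R + 2 -> 1 <= expR (- I) * expR (V x).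
Proof.
move=> hx; rewrite -expRD; apply: le_trans (expR_ge1Dx _).
have := V_lb _ _ hx; rewrite -/I; lra.
Qed.

Lemma meV : measurable_fun [set: E] (fun x => (expR (V x))%:E).
Proof. apply: mEFin; have := measurableT_comp (@measurable_expR R) mV; exact. Qed.

Lemma B1 : (muV mu V (fun x => ((f x ^+ 2) * \1_[set y | rho d o y <= n%:R] x)%:E)
   <= (expR Z)%:E * \int[mu]_x ((g x ^+ 2)%:E))%E.
Proof.
rewrite /muV -ge0_integralZl_EFin //; last first.
all: first [ exact: expR_ge0 | (by move=> x _; rewrite lee_fin sqr_ge0) |
  (apply: mEFin; apply: measurable_funX; exact: g_meas) | idtac ].
apply: ge0_le_integral => //.
- move=> x _; apply: mule_ge0; rewrite lee_fin ?expR_ge0 //.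
  by rewrite mulr_ge0 ?sqr_ge0 // indicE ler0n.
- apply: emeasurable_funM; last exact: meV.
  apply: mEFin; apply: measurable_funM; first by apply: measurable_funX.
  exact: measurable_indic (meas_le _).
- apply: measurable_funeM; apply: mEFin; apply: measurable_funX; exact: g_meas.
- move=> x _; rewrite indicE; case: (boolP (x \in [set y | rho d o y <= n%:R])) => hx.
  + have hx' : rh x <= n%:R by exact: set_mem hx.
    rewrite mulr1 g_near // -!EFinM lee_fin mulrC; apply: ler_wpM2r; first exact: sqr_ge0.
    rewrite ler_expR; apply: V_ub; lra.
  + rewrite mulr0 mul0e; apply: mule_ge0; rewrite lee_fin ?expR_ge0 ?sqr_ge0 //.
Qed.

Lemma B2 : (\int[mu]_x ((`|g x|)%:E) <= (expR (- I))%:E * muV mu V (fun x => (`|f x|)%:E))%E.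
Proof.
have hk0 : 0 <= k%:R :> R by exact: ler0n.
rewrite /muV -ge0_integralZl_EFin //; last first.
all: first [ exact: expR_ge0 | (by move=> x _; apply: mule_ge0; rewrite lee_fin ?expR_ge0) |
  (apply: emeasurable_funM; last exact: meV;
   apply: mEFin; have := measurableT_comp (@normr_measurable R setT) mf; exact) | idtac ].
apply: ge0_le_integral => //.
all: first [ (by move=> x _; rewrite lee_fin) |
  (apply: mEFin; have := measurableT_comp (@normr_measurable R setT) g_meas; exact) |
  (apply: measurable_funeM; apply: emeasurable_funM; last exact: meV;
   apply: mEFin; have := measurableT_comp (@normr_measurable R setT) mf; exact) | idtac ].
- move=> x _; case: (leP (rh x) (n%:R + 1)) => hx.
  + rewrite -!EFinM lee_fin; apply: le_trans (g_abs x) _.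
    have -> : expR (- I) * (`|f x| * expR (V x)) = `|f x| * (expR (- I) * expR (V x)) by ring.
    apply: ler_peMr; first exact: normr_ge0.
    apply: expVI; lra.
  + rewrite g_far // normr0; apply: mule_ge0; rewrite lee_fin ?expR_ge0 //.
Qed.

Let near := [set y | rh y <= n%:R + 1].
Let far := [set x | n%:R + k%:R + 2 < rh x].
Let H x := (\int[mu]_(y in near) (q x y)%:E)%E.

Lemma H_eq x : H x = (\int[mu]_y ((\1_near y * q x y)%:E))%E.
Proof.
rewrite /H integral_mkcond; apply: eq_integral => y _; rewrite patchE indicE.
by case: (y \in near) => /=; rewrite ?mul1r ?mul0r.
Qed.

Lemma H_meas : measurable_fun [set: E] H.
Proof.
have -> : H = fun x => (\int[mu]_y ((\1_near y * q x y)%:E))%E.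
  by apply/funext => x; exact: H_eq.
have := @measurable_fun_fubini_tonelli_F _ _ E E R mu
  (fun p => (\1_near p.2 * q p.1 p.2)%:E).
apply.
- apply: mEFin; apply: measurable_funM => //.
  have := measurableT_comp (@measurable_indic _ E R setT near (meas_le _))
     (@measurable_snd _ _ E E); exact.
- by move=> p; rewrite lee_fin mulr_ge0 ?q0 // indicE ler0n.
Qed.

Lemma H_ge0 x : (0 <= H x)%E.
Proof. by apply: integral_ge0 => y _; rewrite lee_fin q0. Qed.

Lemma ind_meas x : measurable_fun [set: E] (fun y => \1_near y * q x y).
Proof.
apply: measurable_funM; last exact: q_sec.
exact: measurable_indic (meas_le _).
Qed.

Lemma H_le x : far x -> (H x <= L%:E)%E.
Proof.
move=> hx; rewrite H_eq; apply: le_trans (lamx_le x).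
apply: ge0_le_integral => //.
- by move=> y _; rewrite lee_fin mulr_ge0 ?q0 // indicE ler0n.
- exact: mEFin (ind_meas x).
- exact: mEFin (lamx_meas x).
- move=> y _; rewrite lee_fin indicE.
  case: (boolP (y \in near)) => hy; last by rewrite mul0r mq_ge0.
  rewrite mul1r; apply: ler_peMl; first exact: q0.
  have hy' : rh y <= n%:R + 1 by exact: set_mem hy.
  have hk1 : 1 <= k%:R :> R by rewrite ler1n.
  have h1 : rh x - rh y <= d x y := le_trans (ler_norm _) (rho_lip x y).
  have h2 : 1 <= d x y by move: hx; rewrite /far /= => hx; lra.
  by rewrite le_min lexx /=; nra.
Qed.

Lemma eta_le : (etank mu q d o n k <= L%:E)%E.
Proof.
rewrite /etank integral_mkcond.
have h : (\int[mu]_x ((fun x => H x) \_ far) x <= \int[mu]_x (cst L%:E) x)%E.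
  apply: ge0_le_integral => //.
  - by move=> x _; rewrite patchE; case: (x \in far) => //; exact: H_ge0.
  - apply/(measurable_restrictT _ _).1; first exact: meas_gt.
    exact: measurable_funS H_meas.
  - move=> x _; rewrite patchE; case: (boolP (x \in far)) => hx.
    + exact: H_le (set_mem hx).
    + by rewrite lee_fin.
apply: le_trans h _.
by rewrite integral_cst // mu_setT mule1.
Qed.

Lemma eta_ge0 : (0 <= etank mu q d o n k)%E.
Proof. apply: integral_ge0 => x _; exact: H_ge0. Qed.

Lemma Gam_far x : far x -> (Gam mu q g x <= (S ^+ 2)%:E * H x)%E.
Proof.
move=> hx; have hk0 : 0 <= k%:R :> R by exact: ler0n.
have hx' : n%:R + 1 < rh x by move: hx; rewrite /far /=; lra.
rewrite H_eq /Gam -ge0_integralZl_EFin //.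
all: first [ exact: sqr_ge0 | (by move=> y _; rewrite lee_fin mulr_ge0 ?q0 // indicE ler0n) |
  exact: mEFin (ind_meas x) | idtac ].
apply: ge0_le_integral => //.
all: first [ (by move=> y _; rewrite lee_fin mulr_ge0 ?q0 ?sqr_ge0) |
  exact: mEFin (sec_meas_g x) |
  (apply: measurable_funeM; exact: mEFin (ind_meas x)) | idtac ].
by move=> y _; rewrite -EFinM lee_fin key2.
Qed.

Lemma B3 : (Defs.form mu q g <= (2 * expR (- I))%:E * muV mu V (Gam mu q f)
   + (2 * L * expR (- I))%:E * muV mu V (fun x => (f x ^+ 2)%:E)
   + (S ^+ 2)%:E * etank mu q d o n k)%E.
Proof.
pose F1 := fun x => (Gam mu q f x * (expR (V x))%:E)%E.
pose F2 := fun x => ((f x ^+ 2)%:E * (expR (V x))%:E)%E.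
pose F3 := fun x => ((fun x => H x) \_ far) x.
have mF1 : measurable_fun [set: E] F1 := emeasurable_funM (Gam_meas f mf) meV.
have mF2 : measurable_fun [set: E] F2.
  apply: emeasurable_funM meV; apply: mEFin; exact: measurable_funX.
have mF3 : measurable_fun [set: E] F3.
  apply/(measurable_restrictT _ _).1; first exact: meas_gt.
  exact: measurable_funS H_meas.
have F1g x : (0 <= F1 x)%E by apply: mule_ge0; [exact: Gam_ge0|rewrite lee_fin expR_ge0].
have F2g x : (0 <= F2 x)%E by apply: mule_ge0; rewrite lee_fin ?expR_ge0 ?sqr_ge0.
have F3g x : (0 <= F3 x)%E by rewrite /F3 patchE; case: (x \in far) => //; exact: H_ge0.
have c1 : 0 <= 2 * expR (- I) by rewrite mulr_ge0 ?expR_ge0.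
have c2 : 0 <= 2 * L * expR (- I) by rewrite !mulr_ge0 ?expR_ge0.
have c3 : 0 <= S ^+ 2 by exact: sqr_ge0.
have i1 : (\int[mu]_x ((2 * expR (- I))%:E * F1 x) = (2 * expR (- I))%:E * \int[mu]_x F1 x)%E.
  by apply: ge0_integralZl_EFin.
have i2 : (\int[mu]_x ((2 * L * expR (- I))%:E * F2 x) = (2 * L * expR (- I))%:E * \int[mu]_x F2 x)%E.
  by apply: ge0_integralZl_EFin.
have i3 : (\int[mu]_x ((S ^+ 2)%:E * F3 x) = (S ^+ 2)%:E * \int[mu]_x F3 x)%E.
  by apply: ge0_integralZl_EFin.
have iD : (\int[mu]_x ((2 * expR (- I))%:E * F1 x + (2 * L * expR (- I))%:E * F2 x
    + (S ^+ 2)%:E * F3 x) =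
   \int[mu]_x ((2 * expR (- I))%:E * F1 x) + \int[mu]_x ((2 * L * expR (- I))%:E * F2 x)
    + \int[mu]_x ((S ^+ 2)%:E * F3 x))%E.
  rewrite ge0_integralD //.
  - rewrite ge0_integralD //.
    + by move=> x _; apply: mule_ge0; [rewrite lee_fin; first [exact: c1 | exact: c2 | exact: c3] | first [exact: F1g | exact: F2g | exact: F3g]].
    + exact: measurable_funeM.
    + by move=> x _; apply: mule_ge0; [rewrite lee_fin; first [exact: c1 | exact: c2 | exact: c3] | first [exact: F1g | exact: F2g | exact: F3g]].
    + exact: measurable_funeM.
  - by move=> x _; apply: adde_ge0; (apply: mule_ge0; [rewrite lee_fin; first [exact: c1 | exact: c2 | exact: c3] | first [exact: F1g | exact: F2g | exact: F3g]]).
  - by apply: emeasurable_funD; exact: measurable_funeM.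
  - by move=> x _; apply: mule_ge0; [rewrite lee_fin; first [exact: c1 | exact: c2 | exact: c3] | first [exact: F1g | exact: F2g | exact: F3g]].
  - exact: measurable_funeM.
have h : (\int[mu]_x Gam mu q g x <= \int[mu]_x ((2 * expR (- I))%:E * F1 x
    + (2 * L * expR (- I))%:E * F2 x + (S ^+ 2)%:E * F3 x))%E.
  apply: ge0_le_integral => //.
  - by move=> x _; exact: Gam_ge0.
  - exact: Gam_meas g_meas.
  - apply: emeasurable_funD; last exact: measurable_funeM.
    by apply: emeasurable_funD; exact: measurable_funeM.
  move=> x _; case: (boolP (x \in far)) => hx.
  - apply: le_trans (Gam_far x (set_mem hx)) _.
    rewrite /F3 patchE hx; apply: leeDr.
    by apply: adde_ge0; (apply: mule_ge0; [rewrite lee_fin; first [exact: c1 | exact: c2 | exact: c3] | first [exact: F1g | exact: F2g | exact: F3g]]).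
  - have hx' : rh x <= n%:R + k%:R + 2.
      by rewrite leNgt; apply/negP => h; apply: (negP hx); exact: mem_set h.
    have t := expVI x hx'.
    apply: le_trans (Gam_key x) _.
    apply: le_trans _ (leeDl _ _); last by apply: mule_ge0; [rewrite lee_fin; first [exact: c1 | exact: c2 | exact: c3] | first [exact: F1g | exact: F2g | exact: F3g]].
    apply: leeD.
    + rewrite /F1 (muleC (Gam mu q f x)) muleA -EFinM.
      apply: lee_wpmul2r; first exact: Gam_ge0.
      rewrite lee_fin -mulrA; lra.
    + rewrite /F2 -!EFinM lee_fin.
      have -> : 2 * L * expR (- I) * (f x ^+ 2 * expR (V x)) =
        (2 * f x ^+ 2 * L) * (expR (- I) * expR (V x)) by ring.
      apply: ler_peMr; [apply: mulr_ge0 => //; apply: mulr_ge0 => //; exact: sqr_ge0 | exact: t].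
rewrite /Defs.form; apply: le_trans h _.
have e3 : etank mu q d o n k = (\int[mu]_x F3 x)%E by rewrite /etank integral_mkcond.
by rewrite iD i1 i2 i3 e3.
Qed.

Hypothesis hV1 : (\int[mu]_x (expR (V x))%:E = 1)%E.

Lemma muV_bnd (h : E -> \bar R) (B : R) : measurable_fun [set: E] h ->
  (forall x, (0 <= h x)%E) -> (forall x, (h x <= B%:E)%E) ->
  muV mu V h = (fine (muV mu V h))%:E /\ 0 <= fine (muV mu V h).
Proof.
move=> mh h0 hB.
have B0 : 0 <= B by rewrite -lee_fin; exact: le_trans (h0 o) (hB o).
have g0 : (0 <= muV mu V h)%E.
  by apply: integral_ge0 => x _; apply: mule_ge0; rewrite ?lee_fin ?expR_ge0.
have le : (muV mu V h <= B%:E)%E.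
  rewrite /muV.
  have hh : (\int[mu]_x (h x * (expR (V x))%:E) <= \int[mu]_x (B%:E * (expR (V x))%:E))%E.
    apply: ge0_le_integral => //.
    all: try (by move=> x _; apply: mule_ge0; rewrite ?lee_fin ?expR_ge0).
    all: try (apply: emeasurable_funM => //; exact: meV).
    all: try (apply: measurable_funeM; exact: meV).
    all: try (by move=> x _; apply: lee_wpmul2r; [rewrite lee_fin expR_ge0 | exact: hB]).
  apply: le_trans hh _.
  rewrite ge0_integralZl_EFin //.
  all: try (by rewrite hV1 mule1).
  all: try (by move=> x _; rewrite lee_fin expR_ge0).
  all: try exact: meV.
have fin : muV mu V h \is a fin_num.
  by rewrite ge0_fin_numE //; exact: le_lt_trans le (ltry _).
split; first by rewrite fineK.
by rewrite -lee_fin fineK.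
Qed.

Variables (beta : R -> R) (s : R).
Hypothesis hs : 0 < s.
Hypothesis hbeta : 0 < beta s.
Hypothesis hSPI : forall r, 0 < r -> forall (f : E -> R) (e : R), closure_form mu q f e ->
     (\int[mu]_x ((f x ^+ 2)%R)%:E
        <= (r * e)%:E + (beta r)%:E *
             ((\int[mu]_x (`|f x|%R)%:E) * (\int[mu]_x (`|f x|%R)%:E)))%E.

Lemma final :
    (muV mu V (fun x => ((f x ^+ 2) * \1_[set y | rho d o y <= n%:R] x)%R%:E)
     <= (2 * s * expR (Knk d o V n k))%:E * muV mu V (Gam mu q f)
        + (16 * s * expR (Knk d o V n k))%:E * lam mu q d
            * muV mu V (fun x => ((f x ^+ 2)%R)%:E)
        + (16 * s * expR (Zn d o V n))%:E * etank mu q d o n k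
            * ((sup_norm f ^+ 2)%R)%:E
        + (beta s * expR (Jnk d o V n k))%:E
            * (muV mu V (fun x => (`|f x|%R)%:E) * muV mu V (fun x => (`|f x|%R)%:E)))%E.
Proof.
have [ha a0] := muV_bnd (Gam mu q f) MG (Gam_meas f mf) (Gam_ge0 f) hMG.
have [hb b0] := muV_bnd (fun x => (f x ^+ 2)%:E) (Mf ^+ 2)
  (mEFin (measurable_funX _ mf)) (fun x => ltac:(by rewrite lee_fin sqr_ge0))
  (fun x => ltac:(by rewrite lee_fin f_sq)).
have [hc c0] := muV_bnd (fun x => (`|f x|)%:E) Mf
  (mEFin (measurableT_comp (@normr_measurable R setT) mf))
  (fun x => ltac:(by rewrite lee_fin normr_ge0))
  (fun x => ltac:(by rewrite lee_fin hMf)).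
set a := fine (muV mu V (Gam mu q f)) in ha a0.
set b := fine (muV mu V (fun x => (f x ^+ 2)%:E)) in hb b0.
set c := fine (muV mu V (fun x => (`|f x|)%:E)) in hc c0.
have hfe : etank mu q d o n k \is a fin_num.
  by rewrite ge0_fin_numE ?eta_ge0 //; exact: le_lt_trans eta_le (ltry _).
set h := fine (etank mu q d o n k).
have he : etank mu q d o n k = h%:E by rewrite fineK.
have h0 : 0 <= h by rewrite -lee_fin -he eta_ge0.
have G1g : (0 <= \int[mu]_x ((`|g x|)%:E))%E by apply: integral_ge0 => x _; rewrite lee_fin.
have G1fin : (\int[mu]_x ((`|g x|)%:E))%E \is a fin_num.
  rewrite ge0_fin_numE //; apply: le_lt_trans B2 _; rewrite hc -EFinM; exact: ltry.
set g1 := fine (\int[mu]_x ((`|g x|)%:E))%E.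
have hg1 : (\int[mu]_x ((`|g x|)%:E))%E = g1%:E by rewrite fineK.
have g10 : 0 <= g1 by rewrite -lee_fin -hg1.
have g1le : g1 <= expR (- I) * c by rewrite -lee_fin -hg1 EFinM -hc; exact: B2.
have egle : eg <= 2 * expR (- I) * a + 2 * L * expR (- I) * b + S ^+ 2 * h.
  by rewrite -lee_fin -form_gE !EFinD !EFinM -ha -hb -he -!EFinM; exact: B3.
have spi := hSPI s hs g eg g_cf; rewrite hg1 -!EFinM -EFinD in spi.
have eZ0 : (0 <= (expR Z)%:E)%E by rewrite lee_fin expR_ge0.
have lhs := le_trans B1 (lee_wpmul2l eZ0 spi).
rewrite -EFinM in lhs.
apply: le_trans lhs _.
rewrite ha hb hc hL he -!EFinM -!EFinD lee_fin.
have eK : expR Z * expR (- I) <= expR (Knk d o V n k).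
  rewrite -expRD ler_expR /Knk -/I.
  have : Z <= supV d o V (n%:R + 2) by apply: supV_mono; [| lra].
  lra.
have eJ : expR (Jnk d o V n k) = expR Z * expR (- I) * expR (- I).
  by rewrite -!expRD /Jnk -/I -/Z; congr expR; ring.
have eZn : Zn d o V n = Z by [].
rewrite eJ eZn -/S.
move: eK; set eZ := expR Z; set eI := expR (- I); set eKK := expR (Knk d o V n k) => eK.
have eZ0' : 0 <= eZ := expR_ge0 _.
have eI0 : 0 <= eI := expR_ge0 _.
have S2 : 0 <= S ^+ 2 := sqr_ge0 _.
have eK0 : 0 <= eKK := expR_ge0 _.
have s0 : 0 <= s := ltW hs.
have P1 : s * eg <= s * (2 * eI * a + 2 * L * eI * b + S ^+ 2 * h) := ler_wpM2l (ltW hs) egle.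
have P1' := ler_wpM2l eZ0' P1.
have P2 : g1 * g1 <= (eI * c) * (eI * c) := ler_pM g10 g10 g1le g1le.
have P3 := ler_wpM2l eZ0' (ler_wpM2l (ltW hbeta) P2).
have K1 : eZ * eI * (2 * s * a) <= eKK * (2 * s * a).
  by apply: ler_wpM2r => //; rewrite !mulr_ge0.
have K2 : eZ * eI * (2 * s * L * b) <= eKK * (2 * s * L * b).
  by apply: ler_wpM2r => //; rewrite !mulr_ge0.
have K3 : 0 <= s * eKK * L * b by rewrite !mulr_ge0.
have K4 : 0 <= s * eZ * h * S ^+ 2.
  by apply: mulr_ge0 => //; apply: mulr_ge0 => //; exact: mulr_ge0.
lra.
Qed.

End Main.

Theorem lemma2p7 (R : realType) (dE : measure_display) (E : measurableType dE)
  (d : E -> E -> R) (mu : probability E R) (q : E -> E -> R) (o : E)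
  (V : E -> R) (beta : R -> R) :
  polish_borel d ->
  measurable_fun [set: E * E] (fun p => q p.1 p.2) ->
  (forall x y, 0 <= q x y) -> (forall x, q x x = 0) ->
  (lam mu q d < +oo)%E ->
  A_dense mu q ->
  measurable_fun [set: E] V ->
  (forall r : R, exists M : R, forall x, rho d o x <= r -> `|V x| <= M) ->
  (\int[mu]_x (expR (V x))%:E = 1)%E ->
  (forall r, 0 < r -> 0 < beta r) ->
  (forall r r', 0 < r -> r <= r' -> beta r' <= beta r) ->
  (forall r, 0 < r -> forall (f : E -> R) (e : R), closure_form mu q f e ->
     (\int[mu]_x ((f x ^+ 2)%R)%:E
        <= (r * e)%:E + (beta r)%:E *
             ((\int[mu]_x (`|f x|%R)%:E) * (\int[mu]_x (`|f x|%R)%:E)))%E) ->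
  forall (n k : nat) (s : R) (f : E -> R),
    (1 <= n)%N -> (1 <= k)%N -> 0 < s -> in_A mu q f ->
    (muV mu V (fun x => ((f x ^+ 2) * \1_[set y | rho d o y <= n%:R] x)%R%:E)
     <= (2 * s * expR (Knk d o V n k))%:E * muV mu V (Gam mu q f)
        + (16 * s * expR (Knk d o V n k))%:E * lam mu q d
            * muV mu V (fun x => ((f x ^+ 2)%R)%:E)
        + (16 * s * expR (Zn d o V n))%:E * etank mu q d o n k
            * ((sup_norm f ^+ 2)%R)%:E
        + (beta s * expR (Jnk d o V n k))%:E
            * (muV mu V (fun x => (`|f x|%R)%:E) * muV mu V (fun x => (`|f x|%R)%:E)))%E.
Proof.
move=> hpol mq q0 qdiag hlam hdense mV Vbnd hV1 hbpos hbdec hSPI n k s f hn hk hs hA.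
have [mf [Mf hMf] [MG hMG]] := hA.
have lam0 : (0 <= lam mu q d)%E.
  have h1 : (\int[mu]_y ((Num.min 1 (d o y ^+ 2) * q o y)%:E) <= lam mu q d)%E.
    by apply: ereal_sup_ubound; exists o.
  apply: le_trans h1; apply: integral_ge0 => y _.
  by rewrite lee_fin mulr_ge0 // le_min ler01 sqr_ge0.
have hLfin : lam mu q d \is a fin_num by rewrite ge0_fin_numE.
have hL : lam mu q d = (fine (lam mu q d))%:E by rewrite fineK.
have hL0 : 0 <= fine (lam mu q d) by rewrite -lee_fin -hL.
exact: (final _ _ _ _ _ _ _ hpol n q0 mq _ hL _ mf _ hMf hL0 _ hMG _ mV Vbnd _ hk hV1 _ _ hs (hbpos s hs) hSPI).
Qed.
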